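(* Let $(X_n)$ be i.i.d. real random variables distributed as $X$, with $\mathbb{P}(X<0)>0$ and $X$ non-lattice, and let $(Y_n)$ be i.i.d., independent of $(X_n)$, with $\mathbb{P}(Y_1=1)=p=1-\mathbb{P}(Y_1=-1)$, $p\in(0,1)$. Let $W$ have the stationary distribution of $W_{n+1}=(Y_nW_n+X_n)^+$. Suppose there exists $\kappa>0$ with $\mathbb{E}[e^{\kappa X}]=1/p$ and $m=\mathbb{E}[Xe^{\kappa X}]<\infty$. Let $R=e^W$, $M=Be^X$ with $B$ Bernoulli($p$) independent of $X$, and $(B,X)$ independent of $R$, and let \[C=\frac1m\int_0^\infty\big[\mathbb{P}(R>t)-\mathbb{P}(MR>t)\big]t^{\kappa-1}\,dt.\] Then, with $X$ and $W$ independent, \[C=\frac{1-p}{m\kappa}+\frac{1-p}{m}\int_0^\infty\mathbb{P}(X-W>s)e^{\kappa s}\,ds+\frac pm\int_{-\infty}^0e^{\kappa s}\,\mathbb{P}(X+W\le s)\,ds.\]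
   Context: $W$ denotes a random variable with $W\stackrel{D}{=}(YW+X)^+$, where $W,Y,X$ are independent and $Y\stackrel{D}{=}Y_1$. *)

(* Defs.v *)
From HB Require Import structures.
From mathcomp Require Import all_boot all_order all_algebra.
From mathcomp Require Import all_classical all_reals all_analysis.
Set Implicit Arguments.
Unset Strict Implicit.
Unset Printing Implicit Defensive.
Import Order.TTheory GRing.Theory Num.Theory.
Local Open Scope classical_set_scope.
Local Open Scope ring_scope.

(* Mutual independence of three real random variables: product rule for
   all triples of Borel sets (taking some of them = setT gives the
   sub-family product rules). *)
Definition indep3 (d : measure_display) (T : measurableType d) (R : realType)
  (P : probability T R) (X1 X2 X3 : T -> R) : Prop :=
  forall A1 A2 A3 : set R, measurable A1 -> measurable A2 -> measurable A3 ->
    P (X1 @^-1` A1 `&` X2 @^-1` A2 `&` X3 @^-1` A3) =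
    (P (X1 @^-1` A1) * P (X2 @^-1` A2) * P (X3 @^-1` A3))%E.

Definition lattice_rv (d : measure_display) (T : measurableType d) (R : realType)
  (P : probability T R) (X : T -> R) : Prop :=
  exists (a b : R), 0 < a /\
    P [set w | exists k : int, X w = b + k%:~R * a] = 1%E.

(* Main.v *)
Require Import Defs.
From HB Require Import structures.
From mathcomp Require Import all_boot all_order all_algebra.
From mathcomp Require Import all_classical all_reals all_analysis.
From mathcomp Require Import measurable_realfun.
From mathcomp Require Import lra ring.
Import Order.TTheory GRing.Theory Num.Theory.
Import numFieldNormedType.Exports.
Local Open Scope classical_set_scope.
Local Open Scope ring_scope.

From HB Require Import structures.
From mathcomp Require Import all_boot all_order all_algebra.
From mathcomp Require Import all_classical all_reals all_analysis.
Import Order.TTheory GRing.Theory Num.Theory.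
Local Open Scope classical_set_scope.
Local Open Scope ring_scope.
Section indep.
Context (R : realType) d (T : measurableType d) (P : probability T R) (Z X W : T -> R).
Hypotheses (mZ : measurable_fun setT Z) (mX : measurable_fun setT X) (mW : measurable_fun setT W).
Hypothesis hind : forall A1 A2 A3 : set R, measurable A1 -> measurable A2 -> measurable A3 ->
  P (Z @^-1` A1 `&` X @^-1` A2 `&` W @^-1` A3) = (P (Z @^-1` A1) * P (X @^-1` A2) * P (W @^-1` A3))%E.

Lemma indep_pair (A : set R) (D : set (R * R)) : measurable A -> measurable D ->
  P (Z @^-1` A `&` (fun w => (X w, W w)) @^-1` D) =
  (P (Z @^-1` A) * P ((fun w => (X w, W w)) @^-1` D))%E.
Proof.
move=> mA mD.
set h := (fun w => (X w, W w)).
have mh : measurable_fun setT h by apply: measurable_fun_pair.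
have mZA : measurable (Z @^-1` A) by rewrite -[_ @^-1` _]setTI; exact: mZ.
pose m1 := measure_function_pushforward__canonical__measure_function_Measure (mrestr P mZA) mh.
pose c := fine (P (Z @^-1` A)).
have c0 : (0 <= c)%R by apply: fine_ge0; exact: measure_ge0.
have cE : P (Z @^-1` A) = c%:E by rewrite fineK // fin_num_measure.
pose m0 := measure_function_pushforward__canonical__measure_function_Measure P mh.
pose m2 := mscale (NngNum c0) m0.
have E : m1 D = m2 D.
  apply: (@measure_unique _ _ _ _ (fun=> setT) (measurable_prod_measurableType _ _)) => //.
  - move=> _ _ [B1 mB1 [B2 mB2 <-]] [C1 mC1 [C2 mC2 <-]].
  by exists (B1 `&` C1); [exact: measurableI|exists (B2 `&` C2); [exact: measurableI|rewrite setXI]].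
  - by move=> _; exists setT => //; exists setT => //; rewrite setXTT.
  - by rewrite bigcup_const.
  - move=> _ [B1 mB1 [B2 mB2 <-]].
  rewrite /= /mrestr /pushforward /mscale /=.
  have -> : h @^-1` (B1 `*` B2) = X @^-1` B1 `&` W @^-1` B2 by [].
  rewrite setIC setIA hind // -cE.
  rewrite /pushforward.
  have -> : h @^-1` (B1 `*` B2) = X @^-1` B1 `&` W @^-1` B2 by [].
  have := hind setT B1 B2 measurableT mB1 mB2.
  rewrite preimage_setT setTI => ->.
  by rewrite probability_setT mul1e muleA.
  - move=> _; rewrite /= /mrestr /pushforward.
  apply: (le_lt_trans (probability_le1 _ _)); last exact: ltry.
  by rewrite preimage_setT setTI.
move: E; rewrite /= /mrestr /pushforward /mscale /= => E.
by rewrite setIC E cE.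
Qed.
End indep.

From HB Require Import structures.
From mathcomp Require Import all_boot all_order all_algebra.
From mathcomp Require Import all_classical all_reals all_analysis.
From mathcomp Require Import measurable_realfun.
Import Order.TTheory GRing.Theory Num.Theory.
Local Open Scope classical_set_scope.
Local Open Scope ring_scope.
Section density.
Local Open Scope ereal_scope.
Context (R : realType) d (T : measurableType d) (mu : {measure set T -> \bar R}) (g : T -> R).
Hypotheses (mg : measurable_fun setT g) (g0 : forall x, (0 <= g x)%R).

Definition dens (A : set T) := \int[mu]_(x in A) (g x)%:E.

Let dens0 : dens set0 = 0. Proof. by rewrite /dens integral_set0. Qed.
Let dens_ge0 A : 0 <= dens A.
Proof. by apply: integral_ge0 => x _; rewrite lee_fin. Qed.
Let dens_sa : semi_sigma_additive dens.
Proof.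
apply: semi_sigma_additive_nng_induced; first exact/measurable_EFinP.
by move=> x; rewrite lee_fin.
Qed.
HB.instance Definition _ := isMeasure.Build _ _ _ dens dens0 dens_ge0 dens_sa.
Definition densM : {measure set T -> \bar R} := dens.

Import HBNNSimple.

Lemma dens_integral f E : (forall x, 0 <= f x) ->
    measurable E -> measurable_fun E f ->
  \int[mu]_(x in E) (f x * (g x)%:E) = \int[dens]_(x in E) f x.
Proof.
move=> f0 mE mf.
have mgE : measurable_fun E (EFin \o g).
  by apply/measurable_EFinP; exact: measurable_funTS.
pose h := nnsfun_approx mE mf.
have -> : \int[dens]_(x in E) f x =
    lim (\int[dens]_(x in E) (EFin \o h n) x @[n --> \oo]).
  have fE x : E x -> f x = lim ((EFin \o h n) x @[n --> \oo]).
    by move=> Ex; apply/esym/cvg_lim => //; exact: cvg_nnsfun_approx.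
  under eq_integral => x /[!inE] /fE -> //.
  apply: monotone_convergence => //.
  - move=> n; apply/measurable_EFinP.
    by apply: (measurable_funS measurableT) => //; exact/measurable_funP.
  - by move=> n x Ex //=; rewrite lee_fin.
  - by move=> x Ex a b ab; rewrite lee_fin; exact/lefP/nd_nnsfun_approx.
have -> : \int[mu]_(x in E) (f x * (g x)%:E) =
    lim (\int[mu]_(x in E) ((EFin \o h n) x * (g x)%:E) @[n --> \oo]).
  have fg x : E x -> f x * (g x)%:E = lim (((EFin \o h n) x * (g x)%:E) @[n --> \oo]).
    by move=> Ex; apply/esym/cvg_lim => //; apply: cvgeZr;
      [by []|exact: cvg_nnsfun_approx].
  under eq_integral => x /[!inE] /fg -> //.
  apply: monotone_convergence => [//| | |].
  - move=> n; apply/emeasurable_funM => //.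
    apply/measurable_funTS; exact/measurable_EFinP.
  - by move=> n x Ex /=; rewrite mule_ge0 ?lee_fin.
  - by move=> x Ex a b ab/=; rewrite lee_wpmul2r ?lee_fin//; exact/lefP/nd_nnsfun_approx.
suff suf n : \int[mu]_(x in E) ((EFin \o h n) x * (g x)%:E) =
    \int[dens]_(x in E) (EFin \o h n) x.
  by under eq_fun do rewrite suf.
transitivity (\int[dens]_(x in E)
   (\sum_(y \in range (h n)) (y * \1_(h n @^-1` [set y]) x)%:E)); last first.
  by apply: eq_integral => t tE; rewrite /= fimfunE -fsumEFin.
have indich m r : measurable_fun E (fun x => (r * \1_(h m @^-1` [set r]) x)%:E).
  by apply: (measurable_comp measurableT) => //; exact: measurable_funM.
rewrite ge0_integral_fsum//; last by move=> m y Ey; exact: nnfun_muleindic_ge0.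
transitivity (\int[mu]_(x in E) (\sum_(y \in range (h n))
    (y * \1_(h n @^-1` [set y]) x)%:E * (g x)%:E)).
  under [RHS]eq_integral => x xE.
    rewrite -ge0_mule_fsuml => [|y]; last exact: nnfun_muleindic_ge0.
    rewrite fsumEFin // -(fimfunE _ x); over.
  by [].
rewrite ge0_integral_fsum//; last 2 first.
  - by move=> y; apply: emeasurable_funM => //.
  - by move=> m y Ey; rewrite mule_ge0 ?nnfun_muleindic_ge0 ?lee_fin.
apply: eq_fsbigr => r rhn.
under [RHS]eq_integral do rewrite EFinM.
rewrite integralZl_indic_nnsfun => //.
under eq_integral do rewrite EFinM -muleA.
rewrite ge0_integralZl//.
- under eq_integral do rewrite muleC.
  rewrite (eq_integral ((EFin \o g) \_ (h n @^-1` [set r]))); last first.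
    by move=> x xE; rewrite epatch_indic.
  by rewrite -integral_mkcondr integral_indic// setIC.
- by apply: emeasurable_funM => //; exact/measurable_EFinP.
- by move=> t Et; rewrite mule_ge0 ?lee_fin.
- by move: rhn; rewrite inE => -[t _ <-]; rewrite lee_fin.
Qed.
End density.

From HB Require Import structures.
From mathcomp Require Import all_boot all_order all_algebra.
From mathcomp Require Import all_classical all_reals all_analysis.
From mathcomp Require Import measurable_realfun.
Import Order.TTheory GRing.Theory Num.Theory.
Import numFieldNormedType.Exports.
Local Open Scope classical_set_scope.
Local Open Scope ring_scope.
Section expint.
Context (R : realType).
Local Notation mu := (@lebesgue_measure R).

Let cexpk (k : R) : continuous (fun x : R => expR (k * x)).
Proof.
move=> z; apply: continuous_comp; last exact: continuous_expR.
by apply: continuousM => //; exact: cst_continuous.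
Qed.

Let cexpkk (c k : R) : continuous (fun x : R => c * expR (k * x))%R.
Proof.
move=> z. apply: (@continuous_comp _ _ _ (fun x => expR (k*x)) (fun y => c * y)); first exact: cexpk.
by apply: continuousM => //; exact: cst_continuous.
Qed.

Let dexpk (k x : R) : (fun x => expR (k * x))^`()%classic x = (k * expR (k * x))%R.
Proof.
rewrite (_ : (fun x => expR (k * x)) = expR \o ( *%R k)) //.
rewrite derive1_comp// derive1E.
have /funeqP -> := @derive_expR R.
by rewrite derive1Ml// derive1_id mulr1 mulrC.
Qed.

Lemma int_exp_cc (k a b : R) : (a < b)%R ->
  (\int[mu]_(x in `[a, b]) (k * expR (k * x))%:E = (expR (k * b) - expR (k * a))%:E)%E.
Proof.
move=> ab; rewrite EFinB.
apply: (@continuous_FTC2 _ _ (fun x => expR (k * x))) => //.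
- exact: continuous_subspaceT.
- split.
  + by move=> z _; exact: ex_derive.
  + by apply/cvg_at_right_filter; exact: cexpk.
  + by apply/cvg_at_left_filter; exact: cexpk.
Qed.

Lemma int_exp_cy (k a : R) : (0 < k)%R ->
  (\int[mu]_(x in `[a, +oo[) (k * expR (- k * x))%:E = (expR (- k * a))%:E)%E.
Proof.
move=> k0.
rewrite (@ge0_continuous_FTC2y _ (fun x => k * expR (- k * x))%R
  (fun x => - (expR (- k * x)))%R a 0)//.
- by rewrite EFinN oppeK add0e.
- by move=> x _; rewrite mulr_ge0 ?expR_ge0 // ltW.
- by apply: continuous_subspaceT => x; exact: (cexpkk k (- k)).
- rewrite -oppr0; apply: cvgN.
  rewrite (_ : (fun x => expR (- k * x)) =
               (fun z => expR (- z)) \o (fun z => k * z)); last first.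
    by apply: eq_fun => x; rewrite mulNr.
  apply: (@cvg_comp _ _ _ _ _ _ (pinfty_nbhs R)); last exact: cvgr_expR.
  exact: gt0_cvgMry.
- by apply: cvgN; apply/cvg_at_right_filter; exact: cexpk.
- move=> z _.
  rewrite derive1N; last exact: ex_derive.
  by rewrite dexpk mulNr opprK.
Qed.

Lemma int_exp_Nyc (k e : R) : (0 < k)%R ->
  (\int[mu]_(x in `]-oo, e]) (k * expR (k * x))%:E = (expR (k * e))%:E)%E.
Proof.
move=> k0.
rewrite -[e]opprK ge0_integration_by_substitutionNy.
- rewrite (_ : expR (k * - - e) = expR (- k * - e)); last by rewrite mulNr mulrN.
  rewrite -int_exp_cy //.
  by apply: eq_integral => x _ /=; rewrite mulrN mulNr.
- by apply: continuous_subspaceT => x; exact: (cexpkk k k).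
- by move=> x _; rewrite mulr_ge0 ?expR_ge0 // ltW.
Qed.
End expint.

From HB Require Import structures.
From mathcomp Require Import all_boot all_order all_algebra.
From mathcomp Require Import all_classical all_reals all_analysis.
From mathcomp Require Import measurable_realfun.
From mathcomp Require Import lra.
Import Order.TTheory GRing.Theory Num.Theory.
Import numFieldNormedType.Exports.
Local Open Scope classical_set_scope.
Local Open Scope ring_scope.
Section cov.
Context (R : realType).
Local Notation mu := (@lebesgue_measure R).
Let mexp : measurable_fun setT (@expR R) := @measurable_expR R.
Let Dm := @densM R _ (measurableTypeR R) mu expR mexp (@expR_ge0 R).
Let mexp' : measurable_fun setT (expR : measurableTypeR R -> measurableTypeR R) := @measurable_expR R.
Let nu := measure_function_pushforward__canonical__measure_function_Measure Dm mexp'.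

Let key_itv (a b : R) : mu `]a, b] =
  (\int[mu]_(x in expR @^-1` `]a, b]) (expR x)%:E + mu (`]a, b] `&` `]-oo, 0%R]))%E.
Proof.
have [b0|b0] := leP b 0.
  rewrite (_ : expR @^-1` _ = set0); last first.
    apply/seteqP; split => x //=; rewrite in_itv /= => /andP[_ xb].
    by have := lt_le_trans (expR_gt0 x) (le_trans xb b0); rewrite ltxx.
  rewrite integral_set0 add0e setIidl //.
  by move=> x /=; rewrite !in_itv /= => /andP[_ xb]; exact: le_trans xb b0.
have [a0|a0] := leP a 0.
  rewrite (_ : expR @^-1` _ = `]-oo, ln b]%classic); last first.
    apply/seteqP; split => x /=; rewrite !in_itv /=.
      by move=> /andP[_ xb]; rewrite -ler_expR lnK ?posrE.
    move=> xb; apply/andP; split; first exact: le_lt_trans a0 (expR_gt0 x).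
    by move: xb; rewrite -ler_expR lnK // posrE.
  have -> : (\int[mu]_(x in `]-oo, ln b]) (expR x)%:E = b%:E)%E.
    rewrite -{2}(@lnK _ b) ?posrE // -[X in _ = (expR X)%:E]mul1r.
    rewrite -(@int_exp_Nyc R 1 (ln b) ltr01).
    by apply: eq_integral => x _; rewrite !mul1r.
  rewrite (_ : `]a, b]%classic `&` `]-oo, 0%R]%classic = `]a, 0%R]%classic); last first.
    apply/seteqP; split => x /=; rewrite !in_itv /= ?andbT.
      by move=> [/andP[-> _] ->].
    by move=> /andP[ax x0]; split => //; rewrite ax (le_trans x0 (ltW b0)).
  rewrite !lebesgue_measure_itv /= !lte_fin (le_lt_trans a0 b0).
  case: ifPn => [a0'|].
    by rewrite -!EFinB -EFinD; congr EFin; lra.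
  rewrite -leNgt => a0'.
  have -> : a = 0 by apply/le_anti; rewrite a0 a0'.
  by rewrite -EFinB adde0 subr0.
rewrite (_ : `]a, b]%classic `&` `]-oo, 0%R]%classic = set0); last first.
  apply/seteqP; split => x //=; rewrite !in_itv /= ?andbT.
  by move=> [/andP[ax _] x0]; have := lt_le_trans (lt_trans a0 ax) x0; rewrite ltxx.
rewrite measure0 adde0.
have [ab|ba] := ltP a b.
  rewrite (_ : expR @^-1` _ = `]ln a, ln b]%classic); last first.
    by apply/seteqP; split => x /=; rewrite !in_itv /= -[ln a < x]ltr_expR -[x <= ln b]ler_expR !lnK ?posrE.
  rewrite integral_itv_obnd_cbnd; last first.
    by apply/measurable_EFinP; exact: measurable_funTS mexp.
  have lnab : ln a < ln b by rewrite -ltr_expR !lnK ?posrE.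
  have := @int_exp_cc R 1 (ln a) (ln b) lnab.
  rewrite !mul1r !lnK ?posrE // => E.
  rewrite lebesgue_measure_itv /= lte_fin ab -EFinB -E.
  by apply: eq_integral => x _; rewrite !mul1r.
rewrite (_ : expR @^-1` _ = set0); last first.
  apply/seteqP; split => x //=; rewrite in_itv /= => /andP[ax xb].
  by have := lt_le_trans ax (le_trans xb ba); rewrite ltxx.
by rewrite integral_set0 lebesgue_measure_itv /= lte_fin ltNge ba.
Qed.

Lemma dens_exp_pre (A : set R) : measurable A ->
  (@dens R _ (measurableTypeR R) mu expR (expR @^-1` A) = mu (A `&` `]0%R, +oo[))%E.
Proof.
move=> mA.
have m0 : measurable (`]-oo, 0%R]%classic : set (measurableTypeR R)) by exact: measurable_itv.
pose m0m := mrestr (mu : {measure set (measurableTypeR R) -> \bar R}) m0.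
have key B : measurable B -> mu B = measure_add nu m0m B.
  move=> mB; apply: lebesgue_measure_unique => // X [[a b] _ <-].
  rewrite /= /msum !big_ord_recr big_ord0 /= add0e.
  by rewrite /mrestr /pushforward /= key_itv.
rewrite key; last by apply: measurableI => //; exact: measurable_itv.
rewrite measure_addE /= /mrestr /pushforward.
rewrite (_ : A `&` _ `&` _ = set0); last first.
  apply/seteqP; split => x //= [[_ +] +]; rewrite !in_itv /= ?andbT => x0 x0'.
  by have := lt_le_trans x0 x0'; rewrite ltxx.
rewrite measure0 adde0 preimage_setI.
rewrite (_ : expR @^-1` `]0%R, +oo[%classic = setT) ?setIT //.
by apply/seteqP; split => x //= _; rewrite in_itv /= expR_gt0.
Qed.

Lemma cov (f : R -> \bar R) : measurable_fun setT f -> (forall t, (0 <= f t)%E) ->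
  (\int[mu]_(t in `]0%R, +oo[%classic) f t = \int[mu]_s (f (expR s) * (expR s)%:E))%E.
Proof.
move=> mf f0.
rewrite (eq_measure_integral nu); last first.
  move=> A mA A0; rewrite /nu /= /pushforward.
  by rewrite dens_exp_pre // setIidl.
rewrite (ge0_integral_pushforward mexp'); last 3 first.
- exact: measurable_itv.
- exact: measurable_funTS mf.
- by move=> y _; exact: (f0 y).
rewrite (_ : expR @^-1` `]0%R, +oo[%classic = setT); last first.
  by apply/seteqP; split => x //= _; rewrite in_itv /= expR_gt0.
rewrite -(@dens_integral R _ _ mu expR mexp (@expR_ge0 R) (f \o expR) setT) //.
  by move=> x; exact: (f0 (expR x)).
exact: measurableT_comp.
Qed.

Lemma cov_pow (k : R) (g : R -> \bar R) : measurable_fun setT g -> (forall s, (0 <= g s)%E) ->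
  (\int[mu]_(t in `]0%R, +oo[%classic) (g (ln t) * (t `^ (k - 1))%:E) =
   \int[mu]_s (g s * (expR (k * s))%:E))%E.
Proof.
move=> mg g0.
rewrite cov.
- apply: eq_integral => s _ /=.
  rewrite expRK -muleA -EFinM; congr (_ * _%:E)%E.
  by rewrite -expRM -expRD; congr expR; rewrite mulrBr mulr1 subrK mulrC.
- apply: emeasurable_funM.
    exact: measurableT_comp mg (@measurable_ln R).
  by apply/measurable_EFinP; exact: measurable_powR.
- by move=> t; rewrite mule_ge0 // lee_fin powR_ge0.
Qed.
End cov.

From HB Require Import structures.
From mathcomp Require Import all_boot all_order all_algebra.
From mathcomp Require Import all_classical all_reals all_analysis.
From mathcomp Require Import measurable_realfun.
From mathcomp Require Import lra.
Import Order.TTheory GRing.Theory Num.Theory.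
Import numFieldNormedType.Exports.
Local Open Scope classical_set_scope.
Local Open Scope ring_scope.
Section prob.
Context (R : realType) d (T : measurableType d) (P : probability T R).

Lemma mset_lt d' (U : measurableType d') (f : U -> R) s : measurable_fun setT f ->
  measurable [set w | s < f w].
Proof.
move=> mf; have := mf measurableT _ (measurable_itv `]s, +oo[).
by rewrite setTI preimage_itvoy.
Qed.

Lemma mset_le d' (U : measurableType d') (f : U -> R) s : measurable_fun setT f ->
  measurable [set w | f w <= s].
Proof.
move=> mf; have := mf measurableT _ (measurable_itv `]-oo, s]).
by rewrite setTI preimage_itvNyc.
Qed.

Lemma mset_eq (f : T -> R) s : measurable_fun setT f -> measurable [set w | f w = s].
Proof.
move=> mf; have := mf measurableT _ (measurable_set1 s).
by rewrite setTI.
Qed.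

Lemma full_setI (S E : set T) : measurable S -> measurable E -> P E = 1%E ->
  P S = P (S `&` E).
Proof.
move=> mS mE hE.
have H : (P (S `\` E) <= P (~` E))%E.
  by apply: le_measure; rewrite ?inE; [exact: measurableD|exact: measurableC|move=> x []].
rewrite probability_setC // hE subee // in H.
rewrite (measureDI P mS mE) [X in (X + _)%E](_ : _ = 0%E) ?add0e //.
apply/le_anti/andP; split; [exact: H|exact: measure_ge0].
Qed.

Lemma prob_compl (f : T -> R) s : measurable_fun setT f ->
  P [set w | (f w <= s)%R] = (1 - P [set w | (s < f w)%R])%E.
Proof.
move=> mf; rewrite -probability_setC; last exact: mset_lt.
congr (P _); apply/seteqP; split => w /=.
  by move=> ws; apply/negP; rewrite -leNgt.
by move/negP; rewrite -leNgt.
Qed.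

Lemma prob_fin (A : set T) : measurable A -> P A = (fine (P A))%:E.
Proof. by move=> mA; rewrite fineK // fin_num_measure. Qed.

Lemma lt_expR_ln (t y : R) : 0 < t -> (t < expR y) = (ln t < y).
Proof. by move=> t0; rewrite -[ln t < y]ltr_expR lnK // posrE. Qed.

Lemma PU (A B : set T) : measurable A -> measurable B -> A `&` B = set0 ->
  P (A `|` B) = (P A + P B)%E.
Proof. by move=> mA mB AB; exact: measureU. Qed.

Lemma prob_two (Z : T -> R) (a b : R) (q : R) : measurable_fun setT Z -> a != b ->
  P [set w | Z w = a] = q%:E -> P [set w | Z w = b] = (1 - q)%:E ->
  P ([set w | Z w = a] `|` [set w | Z w = b]) = 1%E.
Proof.
move=> mZ ab ha hb.
rewrite PU; [|exact: mset_eq|exact: mset_eq|].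
  by rewrite ha hb -EFinD addrC subrK.
apply/seteqP; split => w //= [-> wb].
by move: ab; rewrite wb eqxx.
Qed.
End prob.
Arguments mset_lt {R d' U f} s _.
Arguments mset_le {R d' U f} s _.
Arguments mset_eq {R d T f} s _.
Arguments full_setI {R d T} P {S E} _ _ _.
Arguments prob_compl {R d T} P {f} s _.
Arguments prob_fin {R d T} P {A} _.
Arguments lt_expR_ln {R} t y _.
Arguments PU {R d T} P {A B} _ _ _.
Arguments prob_two {R d T} P {Z a b q} _ _ _ _.

Section facts.
Context (R : realType) d (T : measurableType d) (P : probability T R).
Variables (X Y W B : T -> R) (p : R).
Hypotheses (mX : measurable_fun setT X) (mY : measurable_fun setT Y)
  (mW : measurable_fun setT W) (mB : measurable_fun setT B).
Hypotheses (hY1 : P [set w | Y w = 1] = p%:E) (hYm1 : P [set w | Y w = -1] = (1 - p)%:E).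
Hypotheses (hB1 : P [set w | B w = 1] = p%:E) (hB0 : P [set w | B w = 0] = (1 - p)%:E).
Hypothesis hindY : forall A1 A2 A3 : set R, measurable A1 -> measurable A2 -> measurable A3 ->
  P (Y @^-1` A1 `&` X @^-1` A2 `&` W @^-1` A3) = (P (Y @^-1` A1) * P (X @^-1` A2) * P (W @^-1` A3))%E.
Hypothesis hindB : forall A1 A2 A3 : set R, measurable A1 -> measurable A2 -> measurable A3 ->
  P (B @^-1` A1 `&` X @^-1` A2 `&` W @^-1` A3) = (P (B @^-1` A1) * P (X @^-1` A2) * P (W @^-1` A3))%E.
Hypothesis hstat : forall A : set R, measurable A ->
  P (W @^-1` A) = P ((fun w => Num.max (Y w * W w + X w) 0) @^-1` A).

Let mS (s : R) : measurable [set z : R * R | s < z.1 + z.2].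
Proof. by apply: mset_lt; apply: measurable_funD. Qed.
Let mSm (s : R) : measurable [set z : R * R | s < z.1 - z.2].
Proof. by apply: mset_lt; apply: measurable_funB. Qed.

Lemma F1 s : 0 <= s -> P [set w | s < W w] =
  (p%:E * P [set w | (s < X w + W w)%R] + (1 - p)%:E * P [set w | (s < X w - W w)%R])%E.
Proof.
move=> s0.
rewrite -preimage_itvoy hstat; last exact: measurable_itv.
rewrite preimage_itvoy.
have -> : [set x | (s < Num.max (Y x * W x + X x) 0)%O] = [set w | s < Y w * W w + X w].
  by apply/seteqP; split => w /=; rewrite lt_max (ltNge s 0) s0 orbF.
have mYW : measurable_fun setT (fun w => Y w * W w + X w).
  by apply: measurable_funD => //; exact: measurable_funM.
rewrite (full_setI P (mset_lt s mYW) (measurableU _ _ (mset_eq 1 mY) (mset_eq (-1) mY))); last first.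
  by apply: (prob_two P mY _ hY1 hYm1); apply/eqP => h; lra.
rewrite setIUr (PU P); last 3 first.
- by apply: measurableI; [exact: mset_lt|exact: mset_eq].
- by apply: measurableI; [exact: mset_lt|exact: mset_eq].
- by apply/seteqP; split => w //= [[_ ->] [_ h]]; lra.
have -> : [set w | s < Y w * W w + X w] `&` [set w | Y w = 1] =
    Y @^-1` [set 1] `&` (fun w => (X w, W w)) @^-1` [set z | s < z.1 + z.2].
  apply/seteqP; split => w /=.
    by move=> [h Y1]; split => //; move: h; rewrite Y1 mul1r addrC.
  by move=> [Y1 h]; split => //; rewrite Y1 mul1r addrC.
have -> : [set w | s < Y w * W w + X w] `&` [set w | Y w = -1] =
    Y @^-1` [set -1] `&` (fun w => (X w, W w)) @^-1` [set z | s < z.1 - z.2].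
  apply/seteqP; split => w /=.
    by move=> [h Y1]; split => //; move: h; rewrite Y1 mulN1r addrC.
  by move=> [Y1 h]; split => //; rewrite Y1 mulN1r addrC.
rewrite (@indep_pair _ _ _ P _ _ _ mY mX mW hindY _ _ (measurable_set1 1) (mS s)).
rewrite (@indep_pair _ _ _ P _ _ _ mY mX mW hindY _ _ (measurable_set1 (-1)) (mSm s)).
by rewrite /= hY1 hYm1.
Qed.

Lemma F2 s : s < 0 -> P [set w | s < W w] = 1%E.
Proof.
move=> s0.
rewrite -preimage_itvoy hstat; last exact: measurable_itv.
rewrite preimage_itvoy -(probability_setT P); congr (P _).
by apply/seteqP; split => w //= _; rewrite lt_max s0 orbT.
Qed.

Lemma F3 t : 0 < t -> P [set w | t < B w * expR (X w) * expR (W w)] =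
  (p%:E * P [set w | (ln t < X w + W w)%R])%E.
Proof.
move=> t0.
have mM : measurable_fun setT (fun w => B w * expR (X w) * expR (W w)).
  apply: measurable_funM; first apply: measurable_funM => //.
    exact: measurableT_comp mX.
  exact: measurableT_comp mW.
rewrite (full_setI P (mset_lt t mM) (measurableU _ _ (mset_eq 1 mB) (mset_eq 0 mB))); last first.
  by apply: (prob_two P mB _ hB1 hB0); rewrite oner_eq0.
rewrite setIUr.
have -> : [set w | t < B w * expR (X w) * expR (W w)] `&` [set w | B w = 0] = set0.
  apply/seteqP; split => w //= [+ B0]; rewrite B0 !mul0r => t0'.
  by have := lt_trans t0 t0'; rewrite ltxx.
rewrite setU0.
have -> : [set w | t < B w * expR (X w) * expR (W w)] `&` [set w | B w = 1] =
    B @^-1` [set 1] `&` (fun w => (X w, W w)) @^-1` [set z | ln t < z.1 + z.2].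
  apply/seteqP; split => w /=.
    by move=> [h B1]; split => //; move: h; rewrite B1 mul1r -expRD lt_expR_ln.
  by move=> [B1 h]; split => //; rewrite B1 mul1r -expRD lt_expR_ln.
rewrite (@indep_pair _ _ _ P _ _ _ mB mX mW hindB _ _ (measurable_set1 1) (mS (ln t))).
by rewrite /= hB1.
Qed.

Lemma F4 t : 0 < t -> [set w | t < expR (W w)] = [set w | ln t < W w].
Proof. by move=> t0; apply/seteqP; split => w /=; rewrite lt_expR_ln. Qed.
End facts.

Section rhs.
Context (R : realType).
Local Notation mu := (@lebesgue_measure R).
Lemma I0_lt (s : R) : s < 0 -> \1_(`]-oo, 0[%classic : set R) s = 1 :> R.
Proof. by move=> h; rewrite indicE mem_set //= in_itv /= h. Qed.
Lemma I0_ge (s : R) : 0 <= s -> \1_(`]-oo, 0[%classic : set R) s = 0 :> R.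
Proof. by move=> h; rewrite indicE memNset //= in_itv /= ltNge h. Qed.
Lemma I1_lt (s : R) : s < 0 -> \1_(`[0, +oo[%classic : set R) s = 0 :> R.
Proof. by move=> h; rewrite indicE memNset //= in_itv /= leNgt h. Qed.
Lemma I1_ge (s : R) : 0 <= s -> \1_(`[0, +oo[%classic : set R) s = 1 :> R.
Proof. by move=> h; rewrite indicE mem_set //= in_itv /= h. Qed.
Lemma split0 : [set: R] = `]-oo, 0[ `|` `[0, +oo[.
Proof.
by apply/seteqP; split => x //= _; case: (ltP x 0) => h; [left|right]; rewrite /= in_itv /= h.
Qed.
Lemma disj0 : [disjoint (`]-oo, 0[%classic : set R) & `[0, +oo[].
Proof.
rewrite disj_set2E; apply/eqP; rewrite -subset0 => x []/= /[!in_itv]/= h1; rewrite andbT => h2.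
by have := lt_le_trans h1 h2; rewrite ltxx.
Qed.

Lemma RHS_split (k p : R) (G1 G2 : R -> R) : 0 < k -> 0 <= p <= 1 ->
  measurable_fun setT G1 -> measurable_fun setT G2 ->
  (forall s, 0 <= G1 s) -> (forall s, 0 <= G2 s) ->
  (\int[mu]_s (((1 - p) * \1_(`]-oo, 0[%classic : set R) s
      + p * \1_(`]-oo, 0[%classic : set R) s * G1 s
      + (1 - p) * \1_(`[0, +oo[%classic : set R) s * G2 s)%:E * (expR (k * s))%:E) =
   ((1 - p) / k)%:E + p%:E * \int[mu]_(s in `]-oo, 0%R]) ((expR (k * s))%:E * (G1 s)%:E)
   + (1 - p)%:E * \int[mu]_(s in `[0%R, +oo[) ((G2 s)%:E * (expR (k * s))%:E))%E.
Proof.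
move=> k0 /andP[p0 p1] mG1 mG2 G10 G20.
have p1' : 0 <= 1 - p by rewrite subr_ge0.
have mexpk : measurable_fun setT (fun s : R => expR (k * s)).
  by apply: measurableT_comp => //; exact: measurable_funM.
have mI0 : measurable_fun setT (\1_(`]-oo, 0[%classic : set R) : R -> R).
  exact: measurable_indic.
have mI1 : measurable_fun setT (\1_(`[0, +oo[%classic : set R) : R -> R).
  exact: measurable_indic.
have mg : measurable_fun setT (fun s => ((1 - p) * \1_(`]-oo, 0[%classic : set R) s
      + p * \1_(`]-oo, 0[%classic : set R) s * G1 s
      + (1 - p) * \1_(`[0, +oo[%classic : set R) s * G2 s)).
  apply: measurable_funD; first apply: measurable_funD.
  - exact: measurable_funM.
  - by apply: measurable_funM => //; exact: measurable_funM.
  - by apply: measurable_funM => //; exact: measurable_funM.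
have g0 : forall s, 0 <= (1 - p) * \1_(`]-oo, 0[%classic : set R) s
      + p * \1_(`]-oo, 0[%classic : set R) s * G1 s
      + (1 - p) * \1_(`[0, +oo[%classic : set R) s * G2 s.
  move=> s; rewrite !indicE; apply: addr_ge0; first apply: addr_ge0.
  - by rewrite mulr_ge0 ?ler0n.
  - by rewrite !mulr_ge0 ?ler0n ?G10.
  - by rewrite !mulr_ge0 ?ler0n ?G20.
rewrite split0 ge0_integral_setU; last 5 first.
- exact: measurable_itv.
- exact: measurable_itv.
- apply: measurable_funTS; apply: emeasurable_funM; apply/measurable_EFinP.
    exact: mg.
  exact: mexpk.
- by move=> x _; rewrite mule_ge0 // lee_fin ?expR_ge0 // g0.
- exact: disj0.
rewrite [X in (X + _)%E](_ : _ = (\int[mu]_(s in `]-oo, 0%R[) ((1 - p)%:E * (expR (k * s))%:E +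
   p%:E * ((expR (k * s))%:E * (G1 s)%:E)))%E); last first.
  apply: eq_integral => s; rewrite inE /= in_itv /= => s0.
  rewrite I0_lt // I1_lt // -!EFinM -EFinD; congr EFin; ring.
rewrite (@ge0_integralD _ _ _ mu); last 5 first.
- exact: measurable_itv.
- by move=> x _; rewrite mule_ge0 // lee_fin expR_ge0.
- apply: measurable_funTS; apply: emeasurable_funM => //; apply/measurable_EFinP.
  exact: mexpk.
- by move=> x _; rewrite !mule_ge0 // lee_fin ?expR_ge0.
- apply: measurable_funTS; apply: emeasurable_funM => //.
  by apply: emeasurable_funM; apply/measurable_EFinP.
rewrite (@ge0_integralZl _ _ _ mu); last 4 first.
- exact: measurable_itv.
- by apply: measurable_funTS; apply/measurable_EFinP.
- by move=> x _; rewrite lee_fin expR_ge0.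
- by rewrite lee_fin.
rewrite (@ge0_integralZl _ _ _ mu); last 4 first.
- exact: measurable_itv.
- by apply: measurable_funTS; apply: emeasurable_funM; apply/measurable_EFinP.
- by move=> x _; rewrite mule_ge0 // lee_fin ?expR_ge0.
- by rewrite lee_fin.
have E1 : (\int[mu]_(s in `]-oo, 0%R[) (expR (k * s))%:E = (k^-1)%:E)%E.
  rewrite integral_itv_bndo_bndc; last first.
    by apply: measurable_funTS; apply/measurable_EFinP.
  transitivity (\int[mu]_(s in `]-oo, 0%R]) ((k^-1)%:E * (k * expR (k * s))%:E))%E.
    by apply: eq_integral => s _; rewrite -EFinM mulrA mulVf ?mul1r // gt_eqF.
  rewrite (@ge0_integralZl _ _ _ mu); last 4 first.
- exact: measurable_itv.
  - apply: measurable_funTS; apply/measurable_EFinP.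
    exact: measurable_funM.
  - by move=> x _; rewrite lee_fin mulr_ge0 ?expR_ge0 // ltW.
  - by rewrite lee_fin invr_ge0 ltW.
  by rewrite int_exp_Nyc // mulr0 expR0 mule1.
rewrite E1 integral_itv_bndo_bndc; last first.
  apply: measurable_funTS; apply: emeasurable_funM; apply/measurable_EFinP => //.
rewrite [X in (_ + X)%E](_ : _ = (\int[mu]_(s in `[0%R, +oo[) ((1 - p)%:E * ((G2 s)%:E * (expR (k * s))%:E)))%E); last first.
  apply: eq_integral => s; rewrite inE /= in_itv /= andbT => s0.
  rewrite I0_ge // I1_ge // -!EFinM; congr EFin; ring.
rewrite (@ge0_integralZl _ _ _ mu); last 4 first.
- exact: measurable_itv.
- by apply: measurable_funTS; apply: emeasurable_funM; apply/measurable_EFinP.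
- by move=> x _; rewrite mule_ge0 // lee_fin ?expR_ge0.
- by rewrite lee_fin.
by rewrite -EFinM.
Qed.
End rhs.


Section cdf.
Context (R : realType) d (T : measurableType d) (P : probability T R).
Lemma cdf_meas (f : T -> R) : measurable_fun setT f ->
  measurable_fun setT (fun s : R => fine (P [set w | (f w <= s)%R])).
Proof.
move=> mf; apply: nondecreasing_measurable => // x y xy.
rewrite -lee_fin -(prob_fin P (mset_le x mf)) -(prob_fin P (mset_le y mf)).
apply: le_measure; rewrite ?inE; [exact: mset_le|exact: mset_le|].
by move=> w /= h; exact: le_trans h xy.
Qed.
Lemma tail_meas (f : T -> R) : measurable_fun setT f ->
  measurable_fun setT (fun s : R => fine (P [set w | (s < f w)%R])).
Proof.
move=> mf; apply: nonincreasing_measurable => // x y xy.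
rewrite -lee_fin -(prob_fin P (mset_lt x mf)) -(prob_fin P (mset_lt y mf)).
apply: le_measure; rewrite ?inE; [exact: mset_lt|exact: mset_lt|].
by move=> w /= h; exact: le_lt_trans xy h.
Qed.
End cdf.

Theorem proposition4p2 (R : realType) (d : measure_display)
  (T : measurableType d) (P : probability T R)
  (X Y W B : {RV P >-> R}) (p kappa : R) :
  (* P(X < 0) > 0, X non-lattice *)
  (0 < P [set w | (X w < 0)%R])%E ->
  ~ lattice_rv P X ->
  (* Y = +1 w.p. p, -1 w.p. 1 - p, p in (0,1) *)
  0 < p < 1 ->
  P [set w | Y w = 1] = p%:E ->
  P [set w | Y w = -1] = (1 - p)%:E ->
  (* W has the stationary law: W =_D (Y W + X)^+ with X, Y, W independent *)
  indep3 P X Y W ->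
  (forall A : set R, measurable A ->
     P (W @^-1` A) = P ((fun w => Num.max (Y w * W w + X w) 0) @^-1` A)) ->
  (* Cramer-type condition *)
  0 < kappa ->
  (\int[P]_w (expR (kappa * X w))%:E = (p^-1)%:E)%E ->
  P.-integrable setT (fun w => (X w * expR (kappa * X w))%:E) ->
  (* B Bernoulli(p), and B, X, R = e^W mutually independent *)
  P [set w | B w = 1] = p%:E ->
  P [set w | B w = 0] = (1 - p)%:E ->
  indep3 P B X W ->
  let m := fine (\int[P]_w (X w * expR (kappa * X w))%:E) in
  let Rv := fun w => expR (W w) in
  let M := fun w => B w * expR (X w) in
  let C := ((m^-1)%:E *
     \int[lebesgue_measure]_(t in `]0%R, +oo[%classic)
        ((P [set w | (t < Rv w)%R] - P [set w | (t < M w * Rv w)%R]) *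
         (t `^ (kappa - 1))%R%:E))%E in
  C = ((((1 - p) / (m * kappa))%:E) +
       ((1 - p) / m)%:E *
         \int[lebesgue_measure]_(s in `[0%R, +oo[%classic)
            (P [set w | (s < X w - W w)%R] * (expR (kappa * s))%:E) +
       (p / m)%:E *
         \int[lebesgue_measure]_(s in `]-oo, 0%R]%classic)
            ((expR (kappa * s))%:E * P [set w | (X w + W w <= s)%R]))%E.
Proof.
move=> _ _ /andP[p0 p1] hY1 hYm1 hind3 hstat k0 _ _ hB1 hB0 hindB m Rv M C.
have mX : measurable_fun setT X := measurable_funPT X.
have mY : measurable_fun setT Y := measurable_funPT Y.
have mW : measurable_fun setT W := measurable_funPT W.
have mB : measurable_fun setT B := measurable_funPT B.
have hindY : forall A1 A2 A3 : set R, measurable A1 -> measurable A2 -> measurable A3 ->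
    P (Y @^-1` A1 `&` X @^-1` A2 `&` W @^-1` A3) =
    (P (Y @^-1` A1) * P (X @^-1` A2) * P (W @^-1` A3))%E.
  move=> A1 A2 A3 m1 m2 m3; rewrite (setIC (Y @^-1` A1)) (hind3 A2 A1 A3 m2 m1 m3).
  by rewrite (muleC (P (X @^-1` A2))).
have mXW : measurable_fun setT (fun w => X w + W w) by exact: measurable_funD.
have mXmW : measurable_fun setT (fun w => X w - W w) by exact: measurable_funB.
pose G1 := fun s => fine (P [set w | (X w + W w <= s)%R]).
pose G2 := fun s => fine (P [set w | (s < X w - W w)%R]).
have mG1 : measurable_fun setT G1 by exact: cdf_meas.
have mG2 : measurable_fun setT G2 by exact: tail_meas.
have G10 s : 0 <= G1 s by apply: fine_ge0; exact: measure_ge0.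
have G20 s : 0 <= G2 s by apply: fine_ge0; exact: measure_ge0.
pose g := fun s => (1 - p) * \1_(`]-oo, 0[%classic : set R) s
      + p * \1_(`]-oo, 0[%classic : set R) s * G1 s
      + (1 - p) * \1_(`[0, +oo[%classic : set R) s * G2 s.
have mg : measurable_fun setT g.
  have mI0 : measurable_fun setT (\1_(`]-oo, 0[%classic : set R) : R -> R).
    exact: measurable_indic.
  have mI1 : measurable_fun setT (\1_(`[0, +oo[%classic : set R) : R -> R).
    exact: measurable_indic.
  apply: measurable_funD; first apply: measurable_funD.
  - exact: measurable_funM.
  - by apply: measurable_funM => //; exact: measurable_funM.
  - by apply: measurable_funM => //; exact: measurable_funM.
have p1' : 0 <= 1 - p by rewrite subr_ge0 ltW.
have g0 s : 0 <= g s.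
  rewrite /g !indicE; apply: addr_ge0; first apply: addr_ge0.
  - by rewrite mulr_ge0 ?ler0n.
  - by rewrite !mulr_ge0 ?ler0n ?G10 ?ltW.
  - by rewrite !mulr_ge0 ?ler0n ?G20.
have pw t : 0 < t -> (P [set w | (t < expR (W w))%R] -
    P [set w | (t < B w * expR (X w) * expR (W w))%R])%E = (g (ln t))%:E.
  move=> t0.
  rewrite (@F4 _ _ _ W t t0) (@F3 _ _ _ P X W B p mX mW mB hB1 hB0 hindB t t0).
  have hG1 : G1 (ln t) = 1 - fine (P [set w | (ln t < X w + W w)%R]).
    rewrite /G1 (prob_compl P _ mXW) (prob_fin P (mset_lt _ mXW)).
    by rewrite -EFinB.
  rewrite (prob_fin P (mset_lt (ln t) mXW)).
  case: (ltP (ln t) 0) => lt0.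
  - rewrite (@F2 _ _ _ P X Y W hstat _ lt0) /g I0_lt // I1_lt // hG1.
    by rewrite -EFinM -EFinB; congr EFin; ring.
  - rewrite (@F1 _ _ _ P X Y W p mX mY mW hY1 hYm1 hindY hstat _ lt0).
    rewrite (prob_fin P (mset_lt (ln t) mXW)) (prob_fin P (mset_lt (ln t) mXmW)).
    rewrite /g I0_ge // I1_ge // /G2.
    by rewrite /= -!EFinM -EFinD; congr EFin; ring.
rewrite /C /M /Rv.
rewrite [X in (_ * X)%E = _](_ : _ = \int[lebesgue_measure]_(t in `]0%R, +oo[%classic)
    ((g (ln t))%:E * (t `^ (kappa - 1))%:E))%E; last first.
  apply: eq_integral => t; rewrite inE /= in_itv /= andbT => t0.
  by rewrite /= pw.
rewrite (@cov_pow R kappa (fun s => (g s)%:E)); last 2 first.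
- by apply/measurable_EFinP.
- by move=> s; rewrite lee_fin.
rewrite /g (@RHS_split R kappa p G1 G2 k0 _ mG1 mG2 G10 G20); last by rewrite (ltW p0) (ltW p1).
have -> : (\int[lebesgue_measure]_(s in `[0%R, +oo[) ((G2 s)%:E * (expR (kappa * s))%:E) =
    \int[lebesgue_measure]_(s in `[0%R, +oo[%classic)
            (P [set w | (s < X w - W w)%R] * (expR (kappa * s))%:E))%E.
  by apply: eq_integral => s _; rewrite /G2 -(prob_fin P (mset_lt s mXmW)).
have -> : (\int[lebesgue_measure]_(s in `]-oo, 0%R]) ((expR (kappa * s))%:E * (G1 s)%:E) =
    \int[lebesgue_measure]_(s in `]-oo, 0%R]%classic)
            ((expR (kappa * s))%:E * P [set w | (X w + W w <= s)%R]))%E.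
  by apply: eq_integral => s _; rewrite /G1 -(prob_fin P (mset_le s mXW)).
set I2 := (\int[lebesgue_measure]_(s in `[0%R, +oo[%classic) _)%E.
set I3 := (\int[lebesgue_measure]_(s in `]-oo, 0%R]%classic) _)%E.
have I20 : (0 <= I2)%E.
  apply: integral_ge0 => s _; apply: mule_ge0; [exact: measure_ge0|by rewrite lee_fin expR_ge0].
have I30 : (0 <= I3)%E.
  apply: integral_ge0 => s _; apply: mule_ge0; [by rewrite lee_fin expR_ge0|exact: measure_ge0].
rewrite addeAC ge0_muleDr; last 2 first.
- by apply: adde_ge0; [rewrite lee_fin divr_ge0 // ltW|exact: mule_ge0].
- by apply: mule_ge0 => //; rewrite lee_fin ltW.
rewrite ge0_muleDr; last 2 first.
- by rewrite lee_fin divr_ge0 // ltW.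
- exact: mule_ge0.
rewrite !muleA -!EFinM.
congr (_%:E + _%:E * _ + _%:E * _)%E.
- by rewrite invfM; ring.
- by rewrite mulrC.
- by rewrite mulrC.
Qed.
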